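(* Let $\varepsilon>0$, $\alpha=\varepsilon/(2M)$, $\eta=\alpha/(L+\alpha)$. Run AggGCG (primal) from $y_0\in\mathrm{dom}\, h$, $s_0\in\mathbb{R}^n$: for $k\ge0$, $x_{k+1}=\mathrm{argmin}_x\{\langle s_k,x\rangle+h^\alpha(x)\}$, $y_{k+1}=(1-\eta)y_k+\eta x_{k+1}$, $s_{k+1}=(1-\eta)s_k+\eta\nabla f(y_k)$. Then the method computes a pair $(y_k,s_k)$ satisfying $\phi^\alpha(y_k)+\psi^\alpha(s_k)\le\varepsilon/2$ in $k=\tilde{\mathcal{O}}(1+ML\varepsilon^{-1})$ iterations. Consequently, the complexity to obtain a point $x$ with $\phi(x)-\phi_*\le\varepsilon$ is $\tilde{\mathcal{O}}(1+ML\varepsilon^{-1})$.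
   Context: Let $\|\cdot\|$ be a norm on $\mathbb{R}^n$ with dual norm $\|\cdot\|_*$. Let $f:\mathbb{R}^n\to\mathbb{R}$ be convex, differentiable and $L$-smooth ($L>0$) with respect to $\|\cdot\|$, $h:\mathbb{R}^n\to(-\infty,\infty]$ closed proper convex with bounded domain, and $w:\mathbb{R}^n\to[0,+\infty]$ closed, $1$-strongly convex with respect to $\|\cdot\|$ on $\mathrm{dom}\, h$, with $M:=\max_{x\in\mathrm{dom}\, h}w(x)<\infty$. Let $\phi=f+h$, $\phi_*=\min\phi$, $h^\alpha=h+\alpha w$, $\phi^\alpha=f+h^\alpha$, $\psi^\alpha(z)=(h^\alpha)^*(-z)+f^*(z)$, with $^*$ the convex conjugate. The notation $\tilde{\mathcal{O}}$ hides logarithmic factors (in $\varepsilon$ and the initial gap $\phi^\alpha(y_0)+\psi^\alpha(s_0)$). *)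

(* Defs.v *)
From HB Require Import structures.
From mathcomp Require Import all_boot all_order all_algebra.
From mathcomp Require Import all_classical all_reals all_analysis.
Set Implicit Arguments. Unset Strict Implicit. Unset Printing Implicit Defensive.
Import Order.TTheory GRing.Theory Num.Theory.
Import numFieldNormedType.Exports.
Local Open Scope classical_set_scope.
Local Open Scope ring_scope.

Section Defs.
Variables (R : realType) (n : nat).
Notation V := 'rV[R]_n.

Definition dotp (u v : V) : R := \sum_(i < n) u ord0 i * v ord0 i.

Definition is_norm (N : V -> R) : Prop :=
  [/\ forall x, N x = 0 -> x = 0,
      forall (a : R) x, N (a *: x) = `|a| * N x
    & forall x y, N (x + y) <= N x + N y].

Definition dual_norm (N : V -> R) (s : V) : R :=
  sup [set dotp s x | x in [set x | N x <= 1]].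

Definition is_gradient (f : V -> R) (g : V -> V) : Prop :=
  forall x, differentiable f x /\ forall v, 'd f x v = dotp (g x) v.

Definition convex_fun (f : V -> R) : Prop :=
  forall x y (t : R), 0 <= t <= 1 ->
    f (t *: x + (1 - t) *: y) <= t * f x + (1 - t) * f y.

Definition smooth_wrt (N : V -> R) (g : V -> V) (L : R) : Prop :=
  forall x y, dual_norm N (g x - g y) <= L * N (x - y).

Local Open Scope ereal_scope.

Definition edom (h : V -> \bar R) : set V := [set x | h x < +oo].

Definition eclosed (h : V -> \bar R) : Prop :=
  closed [set p : V * R | h p.1 <= p.2%:E].

Definition econvex (h : V -> \bar R) : Prop :=
  forall x y : V, forall t : R, (0 <= t <= 1)%R ->
    h (t *: x + (1 - t) *: y)%R <= t%:E * h x + (1 - t)%R%:E * h y.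

Definition eproper (h : V -> \bar R) : Prop :=
  (forall x, -oo < h x) /\ exists x, h x < +oo.

Definition bounded_dom (N : V -> R) (h : V -> \bar R) : Prop :=
  exists B : R, forall x, edom h x -> (N x <= B)%R.

Definition strongly_convex_on (N : V -> R) (D : set V) (w : V -> \bar R) : Prop :=
  forall x y : V, forall t : R, D x -> D y -> (0 <= t <= 1)%R ->
    w (t *: x + (1 - t) *: y)%R + ((t * (1 - t) / 2 * N (x - y) ^+ 2)%R)%:E
      <= t%:E * w x + (1 - t)%R%:E * w y.

Definition econj (h : V -> \bar R) (z : V) : \bar R :=
  ereal_sup [set (dotp z x)%:E - h x | x in [set: V]].

Definition rconj (f : V -> R) (z : V) : \bar R :=
  ereal_sup [set (dotp z x - f x)%R%:E | x in [set: V]].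

Definition halpha (h w : V -> \bar R) (alpha : R) (x : V) : \bar R :=
  h x + alpha%:E * w x.

Definition phi (f : V -> R) (h : V -> \bar R) (x : V) : \bar R := (f x)%:E + h x.

Definition phi_star (f : V -> R) (h : V -> \bar R) : \bar R :=
  ereal_inf [set phi f h x | x in [set: V]].

Definition phialpha (f : V -> R) (h w : V -> \bar R) (alpha : R) (x : V) : \bar R :=
  (f x)%:E + halpha h w alpha x.

Definition psialpha (f : V -> R) (h w : V -> \bar R) (alpha : R) (z : V) : \bar R :=
  econj (halpha h w alpha) (- z)%R + rconj f z.

Definition gap (f : V -> R) (h w : V -> \bar R) (alpha : R) (y s : V) : \bar R :=
  phialpha f h w alpha y + psialpha f h w alpha s.

Definition is_argmin_lin (h w : V -> \bar R) (alpha : R) (s x : V) : Prop :=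
  forall z, (dotp s x)%:E + halpha h w alpha x <= (dotp s z)%:E + halpha h w alpha z.

Definition AggGCG (g : V -> V) (h w : V -> \bar R) (alpha eta : R)
    (x y s : nat -> V) : Prop :=
  forall k,
    [/\ is_argmin_lin h w alpha (s k) (x k.+1),
        y k.+1 = ((1 - eta) *: y k + eta *: x k.+1)%R
      & s k.+1 = ((1 - eta) *: s k + eta *: g (y k))%R].

End Defs.

(* Main.v *)
Require Import Defs.
From HB Require Import structures.
From mathcomp Require Import all_boot all_order all_algebra.
From mathcomp Require Import all_classical all_reals all_analysis.
From mathcomp Require Import lra ring.
Import Order.TTheory GRing.Theory Num.Theory.
Import numFieldNormedType.Exports.
Local Open Scope classical_set_scope.
Local Open Scope ring_scope.
Set Implicit Arguments. Unset Strict Implicit. Unset Printing Implicit Defensive.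


Section Basics.
Variables (R : realType) (n : nat).
Notation V := 'rV[R]_n.
Implicit Types (u v w : V).

Lemma dotpDr u v w : dotp u (v + w) = dotp u v + dotp u w.
Proof. rewrite /dotp -big_split /=; apply: eq_bigr => i _; by rewrite mxE mulrDr. Qed.
Lemma dotpDl u v w : dotp (u + v) w = dotp u w + dotp v w.
Proof. rewrite /dotp -big_split /=; apply: eq_bigr => i _; by rewrite mxE mulrDl. Qed.
Lemma dotpZr a u v : dotp u (a *: v) = a * dotp u v.
Proof. rewrite /dotp mulr_sumr; apply: eq_bigr => i _; by rewrite mxE mulrCA. Qed.
Lemma dotpZl a u v : dotp (a *: u) v = a * dotp u v.
Proof. rewrite /dotp mulr_sumr; apply: eq_bigr => i _; by rewrite mxE mulrA. Qed.
Lemma dotpNr u v : dotp u (- v) = - dotp u v.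
Proof. by rewrite -scaleN1r dotpZr mulN1r. Qed.
Lemma dotpNl u v : dotp (- u) v = - dotp u v.
Proof. by rewrite -scaleN1r dotpZl mulN1r. Qed.
Lemma dotpBr u v w : dotp u (v - w) = dotp u v - dotp u w.
Proof. by rewrite dotpDr dotpNr. Qed.
Lemma dotpBl u v w : dotp (u - v) w = dotp u w - dotp v w.
Proof. by rewrite dotpDl dotpNl. Qed.
Lemma dotp0r u : dotp u 0 = 0.
Proof. by rewrite -(scale0r 0) dotpZr mul0r. Qed.

Variable N : V -> R.
Hypothesis HN : is_norm N.

Lemma N0 : N 0 = 0.
Proof. case: HN => _ hZ _. by rewrite -(scale0r 0) hZ normr0 mul0r. Qed.
Lemma NN u : N (- u) = N u.
Proof. case: HN => _ hZ _. by rewrite -scaleN1r hZ normrN normr1 mul1r. Qed.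
Lemma N_ge0 u : 0 <= N u.
Proof.
case: HN => _ _ hT. have := hT u (- u). rewrite subrr N0 NN.
move=> h. have : 0 <= N u *+ 2 by rewrite mulr2n. by rewrite pmulrn_lge0.
Qed.
Lemma NB u v : N (u - v) = N (v - u).
Proof. by rewrite -NN opprB. Qed.
Lemma NZ a u : N (a *: u) = `|a| * N u.
Proof. by case: HN. Qed.
Lemma ND u v : N (u + v) <= N u + N v.
Proof. by case: HN. Qed.
Lemma N_eq0 u : N u = 0 -> u = 0.
Proof. by case: HN => h _ _; apply: h. Qed.

End Basics.

Section Equiv.
Variables (R : realType) (n : nat).
Notation V := 'rV[R]_n.
Variable N : V -> R.
Hypothesis HN : is_norm N.

Lemma coord_le (u : V) i : `|u ord0 i| <= `|u|.
Proof.
change (`|u ord0 i| <= mx_norm u); rewrite mx_normrE.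
exact: (le_bigmax 0 (fun ij : 'I_1 * 'I_n => `|u ij.1 ij.2|) (ord0, i)).
Qed.

Lemma N_sum (I : finType) (F : I -> V) : N (\sum_i F i) <= \sum_i N (F i).
Proof.
apply: (big_ind2 (fun a b => N a <= b)).
- by rewrite N0.
- move=> x1 x2 y1 y2 h1 h2. apply: le_trans (ND HN _ _) _. exact: lerD.
- by [].
Qed.

Definition Kn := \sum_(j < n) N ('e_j : V).

Lemma N_le_K (u : V) : N u <= Kn * `|u|.
Proof.
rewrite {1}(row_sum_delta u). apply: le_trans (N_sum _) _.
rewrite /Kn mulr_suml. apply: ler_sum => j _.
rewrite (NZ HN) mulrC. apply: ler_wpM2l; first exact: N_ge0.
exact: coord_le.
Qed.

Lemma Kn_ge0 : 0 <= Kn.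
Proof. apply: sumr_ge0 => j _; exact: N_ge0. Qed.

Lemma N_cont : continuous N.
Proof.
move=> x. apply/(@cvgrPdist_le _ _ _ (nbhs x) (nbhs_filter x)) => e e0.
have K1 : 0 < Kn + 1 by rewrite ltr_wpDl // Kn_ge0.
near=> y.
have : `|x - y| <= e / (Kn + 1).
  near: y. apply: (@cvgr_dist_le _ _ _ (nbhs x) _ id x cvg_id). by rewrite divr_gt0.
move=> hxy.
have h1 : N x - N y <= N (x - y).
  rewrite lerBlDr. by rewrite -{1}(subrK y x) ND.
have h2 : N y - N x <= N (x - y).
  rewrite lerBlDr (NB HN). by rewrite -{1}(subrK x y) ND.
have h3 : N (x - y) <= Kn * (e / (Kn + 1)).
  apply: le_trans (N_le_K _) _. apply: ler_wpM2l => //. exact: Kn_ge0.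
have h4 : Kn * (e / (Kn + 1)) <= e.
  rewrite mulrA ler_pdivrMr //; have := Kn_ge0; nra.
rewrite ler_norml; apply/andP; split; lra.
Unshelve. all: by end_near.
Qed.


End Equiv.

Lemma coord_bound (R : realType) (n : nat) (N : 'rV[R]_n -> R) : is_norm N ->
  exists c, 0 < c /\ forall u : 'rV[R]_n, `|u| <= c * N u.
Proof.
case: n N => [|m] N' HN'.
  exists 1; split => // u. rewrite (thinmx0 u) normr0 mul1r. exact: N_ge0.
pose S := [set u : 'rV[R]_m.+1 | `|u| = 1].
have S0 : S !=set0.
  pose v : 'rV[R]_m.+1 := const_mx 1.
  have v0 : `|v| != 0.
    rewrite normr_eq0; apply/eqP => /matrixP /(_ ord0 ord0). rewrite !mxE. 
    by move/eqP; rewrite oner_eq0.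
  exists (`|v|^-1 *: v). by rewrite /S /= normrZ normrV ?unitfE // normr_id mulVf.
have Sc : compact S.
  apply: bounded_closed_compact.
    exists 1; split => // M M1 x Sx /=. rewrite Sx; exact: ltW.
  rewrite /S. apply: (preimage_closed (f := fun u : 'rV[R]_m.+1 => `|u|) (D := [set x : R | x = 1])).
    move=> x _. exact: norm_continuous.
  exact: closed_eq.
have [c cS cmin] := EVT_min_rV S0 Sc (continuous_subspaceT (N_cont HN')).
have c1 : `|c| = 1 by move: cS; rewrite inE.
have Nc : 0 < N' c.
  rewrite lt_def N_ge0 // andbT. apply/eqP => /(N_eq0 HN') c0.
  by move: c1; rewrite c0 normr0 => /eqP; rewrite eq_sym oner_eq0.
exists (N' c)^-1; split; first by rewrite invr_gt0.
move=> u. have [->|u0] := eqVneq u 0; first by rewrite normr0 N0 // mulr0.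
have nu : 0 < `|u| by rewrite normr_gt0.
have : N' c <= N' (`|u|^-1 *: u).
  apply: cmin. rewrite inE /S /= normrZ normrV ?unitfE ?normr_id ?mulVf //; by rewrite gt_eqF.
rewrite (NZ HN') normrV ?unitfE ?gt_eqF // normr_id.
rewrite ler_pdivlMl // => h. rewrite ler_pdivlMl //. by rewrite mulrC.
Qed.

Lemma dot_bound (R : realType) (n : nat) (N : 'rV[R]_n -> R) (HN : is_norm N) (e : 'rV[R]_n) : exists B, 0 <= B /\ forall u, `|dotp e u| <= B * N u.
Proof.
have [c [c0 hc]] := coord_bound HN.
exists ((\sum_i `|e ord0 i|) * c); split.
  apply: mulr_ge0 => //; [apply: sumr_ge0 => i _; exact: normr_ge0 | exact: ltW].
move=> u. rewrite /dotp. apply: le_trans (ler_norm_sum _ _ _) _.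
rewrite -mulrA mulr_suml. apply: ler_sum => i _.
rewrite normrM. apply: ler_wpM2l => //. exact: le_trans (coord_le _ _) (hc u).
Qed.



Section Dual.
Variables (R : realType) (n : nat).
Notation V := 'rV[R]_n.
Variable N : V -> R.
Hypothesis HN : is_norm N.

Let DS (e : V) := [set dotp e x | x in [set x | N x <= 1]].

Lemma DS0 e : DS e 0.
Proof. exists 0; last by rewrite dotp0r. by rewrite /= (N0 HN). Qed.

Lemma DS_has_sup e : has_sup (DS e).
Proof.
split; first by exists 0; exact: DS0.
have [B [B0 hB]] := dot_bound HN e.
exists B => _ [x /= Nx <-].
apply: le_trans (ler_norm _) _. apply: le_trans (hB x) _.
by rewrite -{2}(mulr1 B) ler_wpM2l.
Qed.

Lemma dual_ge0 e : 0 <= dual_norm N e.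
Proof. exact: (sup_upper_bound (DS_has_sup e) (DS0 e)). Qed.

Lemma dual_le e u : dotp e u <= dual_norm N e * N u.
Proof.
have [->|u0] := eqVneq u 0; first by rewrite dotp0r (N0 HN) mulr0.
have Nu : 0 < N u.
  rewrite lt_def (N_ge0 HN) andbT; apply/eqP => /(N_eq0 HN) h. by rewrite h eqxx in u0.
have : DS e (dotp e ((N u)^-1 *: u)).
  exists ((N u)^-1 *: u) => //=. rewrite (NZ HN) normrV ?unitfE ?gt_eqF //.
  by rewrite gtr0_norm // mulVf // gt_eqF.
move=> /(sup_upper_bound (DS_has_sup e)) /=. rewrite dotpZr.
by rewrite ler_pdivrMl // mulrC.
Qed.

Lemma dual_approx e d : 0 < d -> exists u, N u <= 1 /\ dual_norm N e - d < dotp e u.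
Proof.
move=> d0. have [_ [u /= Nu <-] h] := sup_adherent d0 (DS_has_sup e).
by exists u.
Qed.

Lemma dual_ub e B : (forall u, N u <= 1 -> dotp e u <= B) -> dual_norm N e <= B.
Proof.
move=> h. apply: ge_sup; first by exists 0; exact: DS0.
by move=> _ [u /= Nu <-]; exact: h.
Qed.

Lemma dual_tri a b : dual_norm N (a + b) <= dual_norm N a + dual_norm N b.
Proof.
apply: dual_ub => u Nu. rewrite dotpDl. apply: lerD.
  apply: le_trans (dual_le _ _) _. by rewrite -{2}(mulr1 (dual_norm N a)) ler_wpM2l // dual_ge0.
apply: le_trans (dual_le _ _) _. by rewrite -{2}(mulr1 (dual_norm N b)) ler_wpM2l // dual_ge0.
Qed.

Lemma dualN_le e : dual_norm N (- e) <= dual_norm N e.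
Proof.
apply: dual_ub => u Nu. rewrite dotpNl -dotpNr.
apply: le_trans (dual_le _ _) _. rewrite (NN HN).
by rewrite -{2}(mulr1 (dual_norm N e)) ler_wpM2l // dual_ge0.
Qed.

Lemma dualN e : dual_norm N (- e) = dual_norm N e.
Proof.
apply/eqP; rewrite eq_le dualN_le /=. by rewrite -{1}(opprK e) dualN_le.
Qed.

End Dual.

Section Smooth.
Variables (R : realType) (n : nat).
Notation V := 'rV[R]_n.
Variable N : V -> R.
Hypothesis HN : is_norm N.
Variables (f : V -> R) (g : V -> V).
Hypothesis Hg : is_gradient f g.

Lemma line_eq (y d : V) (t : R) :
  (fun h : R => h^-1 *: (((fun s : R => f (s *: d + y)) \o shift t) (h *: 1)
      - f (t *: d + y)))
  = (fun h : R => h^-1 *: ((f \o shift (t *: d + y)) (h *: d) - f (t *: d + y))).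
Proof.
apply/funext => h /=. congr (_ *: (_ - _)). congr f.
rewrite -[h *: 1]/(h * 1) mulr1 scalerDl addrA //.
Qed.

Lemma phi_der (y d : V) (t : R) :
  is_derive t 1 (fun s : R => f (s *: d + y)) (dotp (g (t *: d + y)) d).
Proof.
have [hd hv] := Hg (t *: d + y).
apply: DeriveDef.
  rewrite /derivable line_eq. exact: diff_derivable.
rewrite /derive line_eq -hv. have := deriveE d hd. by rewrite /derive.
Qed.

End Smooth.

Lemma der_quad (R : realType) (phi : R -> R) (dphi : R) (c k t : R) :
  is_derive t 1 phi dphi ->
  is_derive t 1 (fun s => phi s - c * s - k * s ^+ 2) (dphi - c - k * (2 * t)).
Proof.
move=> h.
have h1 := is_deriveB (is_deriveB h (is_deriveZ c (is_derive_id t 1)))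
   (is_deriveZ k (is_deriveX 2 (is_derive_id t 1))).
have -> : (fun s => phi s - c * s - k * s ^+ 2) = (phi - c \*: id - k \*: id ^+ 2).
  apply/funext => s. rewrite !fctE /=. done.
apply: (is_derive_eq h1).
change (dphi - c * 1 - k * ((2 * t ^+ 1) * 1) = dphi - c - k * (2 * t)).
by rewrite !mulr1 expr1.
Qed.

Section Smooth2.
Variables (R : realType) (n : nat).
Notation V := 'rV[R]_n.
Variable N : V -> R.
Hypothesis HN : is_norm N.
Variables (f : V -> R) (g : V -> V) (L : R).
Hypothesis Hg : is_gradient f g.
Hypothesis Hc : convex_fun f.
Hypothesis Hs : smooth_wrt N g L.
Hypothesis L0 : 0 <= L.

Lemma grad_ineq y z : f y + dotp (g y) (z - y) <= f z.
Proof.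
set d := z - y.
have hD := phi_der Hg y d 0.
set phi := (fun s : R => f (s *: d + y)) in hD.
set G := (fun h : R => h^-1 *: ((phi \o shift 0) (h *: 1) - phi 0)).
have cv : G @ 0^' --> 'D_1 phi 0.
  have := @ex_derive _ _ _ _ _ _ _ hD. rewrite /derivable. move/cvgP. by [].
have cvr : G @ 0^'+ --> 'D_1 phi 0.
  move=> A /cv /nbhs_ballP [_ /posnumP[e] xe_A].
  by exists e%:num => //= h xe_h /gt_eqF/negbT/xe_A; exact.
have dv : 'D_1 phi 0 = dotp (g y) d by rewrite (@derive_val _ _ _ _ _ _ _ hD) scale0r add0r.
have : 'D_1 phi 0 <= f z - f y.
  apply: (cvgr_to_le cvr). near=> h.
  have h0 : 0 < h by near: h; exact: nbhs_right_gt.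
  have h1 : h < 1 by near: h; exact: nbhs_right_lt.
  rewrite /G /phi /=.
  rewrite -[h *: 1]/(h * 1) mulr1 addr0 scale0r add0r.
  have hc : f (h *: z + (1 - h) *: y) <= h * f z + (1 - h) * f y.
    by apply: Hc; rewrite (ltW h0) (ltW h1).
  have e : h *: z + (1 - h) *: y = h *: d + y.
    by rewrite /d scalerBr scalerBl scale1r [y - _]addrC addrA.
  rewrite e in hc.
  rewrite -[_ *: _]/(_ * _) ler_pdivrMl //. lra.
rewrite dv. lra.
Unshelve. all: by end_near.
Qed.

Lemma descent y z : f z <= f y + dotp (g y) (z - y) + L / 2 * N (z - y) ^+ 2.
Proof.
set d := z - y. set c0 := dotp (g y) d. set k := L / 2 * N d ^+ 2.
pose psi := fun s => f (s *: d + y) - c0 * s - k * s ^+ 2.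
have hder (t : R) : is_derive t (1 : R) psi (dotp (g (t *: d + y)) d - c0 - k * (2 * t)).
  exact: der_quad (phi_der Hg y d t).
have cont : {within `[0, 1], continuous psi}.
  apply: continuous_subspaceT => t.
  have [hd _] := hder t.
  exact/differentiable_continuous/derivable1_diffP.
have [c hc eq] := MVT_segment ler01 (fun t _ => hder t) cont.
have c0' : 0 <= c by move: hc; rewrite in_itv /= => /andP[].
have b1 : dotp (g (c *: d + y)) d - c0 <= L * c * N d * N d.
  rewrite /c0 -dotpBl. apply: le_trans (dual_le HN _ _) _.
  apply: ler_wpM2r; first exact: N_ge0.
  apply: le_trans (Hs _ _) _. rewrite addrK (NZ HN) ger0_norm //. by rewrite mulrA.
have ez : 1 *: d + y = z by rewrite scale1r /d subrK.
move: eq. rewrite /psi ez scale0r add0r subr0 mulr1 mulr0 expr1n expr0n /= mulr1 mulr0 subr0 subr0.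
move=> eq.
have : f z - c0 - k - f y <= 0.
  rewrite eq. rewrite /k. nra.
rewrite /k. lra.
Qed.

End Smooth2.

Lemma le_small (R : realType) (a b c : R) :
  (forall t, 0 < t -> t < 1 -> a <= b + t * c) -> 0 <= c -> a <= b.
Proof.
move=> h c0. apply/ler_addgt0Pr => e e0.
pose t := Num.min (1/2) (e / (c + 1)).
have ec : 0 < e / (c + 1) by rewrite divr_gt0 //; lra.
have t0 : 0 < t by rewrite /t lt_min ec andbT; apply: divr_gt0.
have h12 : (1 / 2 : R) < 1 by lra.
have t1 : t < 1 by rewrite /t gt_min h12.
have tc : t * c <= e.
  have : t <= e / (c + 1) by rewrite ge_min lexx orbT.
  rewrite ler_pdivlMr; last lra. nra.
apply: le_trans (h t t0 t1) _. lra.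
Qed.

Section Conj.
Variables (R : realType) (n : nat).
Notation V := 'rV[R]_n.
Variable N : V -> R.
Hypothesis HN : is_norm N.
Variables (f : V -> R) (g : V -> V) (L : R).
Hypothesis Hg : is_gradient f g.
Hypothesis Hc : convex_fun f.
Hypothesis Hs : smooth_wrt N g L.
Hypothesis L0 : 0 < L.

Lemma rconj_ge s u : ((dotp s u - f u)%:E <= rconj f s)%E.
Proof. apply: ereal_sup_ubound. by exists u. Qed.

Lemma conj_gap s z B : (rconj f s <= B%:E)%E ->
  dotp s z - f z + (dual_norm N (s - g z)) ^+ 2 / (2 * L) <= B.
Proof.
move=> hB.
have L2 : 0 < 2 * L by rewrite mulr_gt0.
have hX u : dotp s u - f u <= B.
  by rewrite -lee_fin; apply: le_trans hB; exact: rconj_ge.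
set E := dual_norm N (s - g z).
have E0 : 0 <= E by exact: dual_ge0.
set X := dotp s z - f z.
suff : E ^+ 2 <= 2 * L * (B - X).
  move=> h. suff : E ^+ 2 / (2 * L) <= B - X by lra.
  rewrite ler_pdivrMr //. by rewrite mulrC.
apply: (le_small (c := 2 * E ^+ 2)); last first.
  by rewrite mulr_ge0 // sqr_ge0.
move=> t t0 t1.
have [E00|Ep] := eqVneq E 0.
  rewrite E00 expr0n /= !mulr0 addr0. have := hX z. rewrite /X. nra.
have Epos : 0 < E by rewrite lt_def Ep E0.
have [d [Nd hd]] := dual_approx HN (s - g z) (mulr_gt0 t0 Epos).
set a := dotp (s - g z) d in hd.
have a0 : 0 <= a.
  rewrite -/E in hd. have : 0 < E - t * E by nra. lra.
pose u := (a / L) *: d + z.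
have hdes := descent HN Hg Hs z u.
have eu : u - z = (a / L) *: d by rewrite /u addrK.
rewrite eu dotpZr (NZ HN) ger0_norm in hdes; last by rewrite divr_ge0 // ltW.
have hXu := hX u.
have esu : dotp s u = a / L * dotp s d + dotp s z by rewrite /u dotpDr dotpZr.
have ha : a = dotp s d - dotp (g z) d by rewrite /a dotpBl.
have Nd0 : 0 <= N d by exact: N_ge0.
have aL : 0 <= a / L by rewrite divr_ge0 // ltW.
have q1 : L / 2 * (a / L * N d) ^+ 2 <= L / 2 * (a / L) ^+ 2.
  apply: ler_wpM2l; first lra.
  rewrite ler_sqr ?nnegrE; [| nra | done]. 
  nra.
have key : X + a ^+ 2 / (2 * L) <= B.
  have e1 : a ^+ 2 / (2 * L) = a / L * a - L / 2 * (a / L) ^+ 2.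
    field. by rewrite gt_eqF.
  rewrite e1. rewrite /X. 
  have : dotp s u - f u <= B := hXu.
  rewrite esu. rewrite ha. rewrite ha in q1 hdes. 
  set p := dotp s d in hdes q1 *. set q := dotp (g z) d in hdes q1 *.
  set r := (dotp s d - dotp (g z) d) / L in hdes q1 *.
  lra.
have : a ^+ 2 <= 2 * L * (B - X).
  have e2 : a ^+ 2 = 2 * L * (a ^+ 2 / (2 * L)) by field; rewrite gt_eqF.
  rewrite e2. apply: ler_wpM2l; first lra. lra.
rewrite -/E in hd.
have : (E - t * E) ^+ 2 <= a ^+ 2.
  rewrite ler_sqr ?nnegrE; [lra | nra | done].
nra.
Qed.

End Conj.

Section HPart.
Variables (R : realType) (n : nat).
Notation V := 'rV[R]_n.
Variable N : V -> R.
Hypothesis HN : is_norm N.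
Variables (h w : V -> \bar R) (al M : R).
Hypothesis Hp : eproper h.
Hypothesis Hcv : econvex h.
Hypothesis Hw0 : forall x, (0 <= w x)%E.
Hypothesis Hsc : strongly_convex_on N (edom h) w.
Hypothesis HwM : forall x, edom h x -> (w x <= M%:E)%E.
Hypothesis al0 : 0 < al.

Definition hr x := fine (h x).
Definition wr x := fine (w x).
Notation H := (halpha h w al).

Lemma hE x : edom h x -> h x = (hr x)%:E.
Proof.
rewrite /edom /= /hr. case: Hp => hp _. have := hp x.
by case: (h x).
Qed.

Lemma wE x : edom h x -> w x = (wr x)%:E.
Proof.
move=> hx. have := HwM hx. have := Hw0 x. rewrite /wr. by case: (w x).
Qed.

Lemma wr_ge0 x : edom h x -> 0 <= wr x.
Proof. move=> hx. have := Hw0 x. by rewrite (wE hx) lee_fin. Qed.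

Lemma HE x : edom h x -> H x = (hr x + al * wr x)%:E.
Proof. move=> hx. by rewrite /halpha (hE hx) (wE hx) EFinD EFinM. Qed.

Lemma Hinf x : ~ edom h x -> H x = +oo%E.
Proof.
move=> hx. have hxy : h x = +oo%E.
  case: Hp => hp _. have := hp x. move: hx. rewrite /edom /=.
  by case: (h x).
rewrite /halpha hxy addye //.
have : (0 <= al%:E * w x)%E by apply: mule_ge0 => //; rewrite lee_fin ltW.
by case: (_ * _)%E.
Qed.

Lemma dom_conv x y t : 0 <= t <= 1 -> edom h x -> edom h y -> edom h (t *: x + (1 - t) *: y).
Proof.
move=> t01 hx hy. rewrite /edom /=. apply: le_lt_trans (Hcv x y t01) _.
by rewrite (hE hx) (hE hy) -!EFinM -EFinD ltry.
Qed.

Lemma hconv x y t : 0 <= t <= 1 -> edom h x -> edom h y ->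
  hr (t *: x + (1 - t) *: y) <= t * hr x + (1 - t) * hr y.
Proof.
move=> t01 hx hy. have := Hcv x y t01.
by rewrite (hE hx) (hE hy) (hE (dom_conv t01 hx hy)) -!EFinM -EFinD lee_fin.
Qed.

Lemma wconv x y t : 0 <= t <= 1 -> edom h x -> edom h y ->
  wr (t *: x + (1 - t) *: y) + t * (1 - t) / 2 * N (x - y) ^+ 2 <= t * wr x + (1 - t) * wr y.
Proof.
move=> t01 hx hy. have := Hsc hx hy t01.
by rewrite (wE hx) (wE hy) (wE (dom_conv t01 hx hy)) -!EFinM -!EFinD lee_fin.
Qed.

Lemma argmin_dom s x y0 : is_argmin_lin h w al s x -> edom h y0 -> edom h x.
Proof.
move=> hm hy0. apply: contrapT => hx. have := hm y0.
by rewrite (Hinf hx) (HE hy0) -EFinD /= leye_eq.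
Qed.

Lemma qg s x z : is_argmin_lin h w al s x -> edom h x -> edom h z ->
  dotp s x + (hr x + al * wr x) + al / 2 * N (z - x) ^+ 2 <= dotp s z + (hr z + al * wr z).
Proof.
move=> hm hx hz.
set Gx := dotp s x + (hr x + al * wr x).
set Gz := dotp s z + (hr z + al * wr z).
have N0 : 0 <= N (z - x) ^+ 2 by rewrite sqr_ge0.
apply: (le_small (c := al / 2 * N (z - x) ^+ 2)); last by rewrite mulr_ge0 // divr_ge0 // ltW.
move=> t t0 t1.
have t01 : 0 <= t <= 1 by rewrite (ltW t0) (ltW t1).
have hzt := dom_conv t01 hz hx.
have := hm (t *: z + (1 - t) *: x).
rewrite (HE hx) (HE hzt) -!EFinD lee_fin dotpDr !dotpZr.
have := hconv t01 hz hx. have := wconv t01 hz hx.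
rewrite -/Gx.
move=> h1 h2 h3.
have : t * (Gx + al / 2 * N (z - x) ^+ 2 - Gz - t * (al / 2 * N (z - x) ^+ 2)) <= 0.
  have h1' := ler_wpM2l (ltW al0) h1.
  rewrite /Gx /Gz in h3 *. lra.
rewrite pmulr_rle0 //. lra.
Qed.

Lemma econj_ge s x : edom h x ->
  ((- dotp s x - (hr x + al * wr x))%:E <= econj H (- s))%E.
Proof.
move=> hx. apply: ereal_sup_ubound. exists x => //.
by rewrite (HE hx) dotpNl EFinB.
Qed.

Lemma econj_step s x g0 eta : is_argmin_lin h w al s x -> edom h x -> 0 <= eta ->
  (econj H (- ((1 - eta) *: s + eta *: g0)) <=
   (- (dotp s x + (hr x + al * wr x)) - eta * dotp (g0 - s) x
     + eta ^+ 2 * dual_norm N (s - g0) ^+ 2 / (2 * al))%:E)%E.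
Proof.
move=> hm hx eta0. apply: ge_ereal_sup => _ [z _ <-].
have [hz|hz] := pselect (edom h z); last first.
  by rewrite (Hinf hz) /= addeNy leNye.
rewrite (HE hz) -EFinB lee_fin.
have q := qg hm hx hz.
have dl := dual_le HN (s - g0) (z - x).
have E0 : 0 <= dual_norm N (s - g0) by exact: dual_ge0.
have Nz : 0 <= N (z - x) by exact: N_ge0.
set E := dual_norm N (s - g0) in dl E0 *.
set Nd := N (z - x) in dl Nz q *.
have ed : dotp (s - g0) (z - x) = dotp s z - dotp s x - dotp g0 z + dotp g0 x.
  rewrite !dotpBl !dotpBr. ring.
rewrite ed in dl.
rewrite dotpNl dotpDl !dotpZl dotpBl.
have key : eta * Nd * E - al / 2 * Nd ^+ 2 <= eta ^+ 2 * E ^+ 2 / (2 * al).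
  have e1 : eta ^+ 2 * E ^+ 2 / (2 * al) - (eta * Nd * E - al / 2 * Nd ^+ 2)
     = (eta * E - al * Nd) ^+ 2 / (2 * al).
    field. by rewrite gt_eqF.
  rewrite -subr_ge0 e1. apply: divr_ge0; first exact: sqr_ge0. by rewrite mulr_ge0 // ltW.
have : eta * (dotp s z - dotp s x - dotp g0 z + dotp g0 x) <= eta * (E * Nd).
  exact: ler_wpM2l.
lra.
Qed.

End HPart.

Section FPart.
Variables (R : realType) (n : nat).
Notation V := 'rV[R]_n.
Variable N : V -> R.
Hypothesis HN : is_norm N.
Variables (f : V -> R) (g : V -> V) (L : R).
Hypothesis Hg : is_gradient f g.
Hypothesis Hc : convex_fun f.
Hypothesis Hs : smooth_wrt N g L.
Hypothesis L0 : 0 < L.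

Lemma rconj_grad y : (rconj f (g y) <= (dotp (g y) y - f y)%:E)%E.
Proof.
apply: ge_ereal_sup => _ [u _ <-]. rewrite lee_fin.
have := grad_ineq Hg Hc y u. rewrite dotpBr. lra.
Qed.

Lemma rconj_step s y Bc eta : 0 <= eta <= 1 -> (rconj f s <= Bc%:E)%E ->
  (rconj f ((1 - eta) *: s + eta *: g y) <=
   ((1 - eta) * Bc + eta * (dotp (g y) y - f y)
     - eta * (1 - eta) * (dual_norm N (s - g y) ^+ 2 / (2 * L)))%:E)%E.
Proof.
move=> /andP[e0 e1] hB. apply: ge_ereal_sup => _ [z _ <-]. rewrite lee_fin.
rewrite dotpDl !dotpZl.
have c1 := conj_gap HN Hg Hs L0 z hB.
have c2 := conj_gap HN Hg Hs L0 z (rconj_grad y).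
set a := dual_norm N (s - g z) in c1.
set b := dual_norm N (g y - g z) in c2.
set E := dual_norm N (s - g y).
have a0 : 0 <= a by exact: dual_ge0.
have b0 : 0 <= b by exact: dual_ge0.
have E0 : 0 <= E by exact: dual_ge0.
have tri : E <= a + b.
  have es : s - g y = (s - g z) + - (g y - g z) by rewrite opprB addrA subrK.
  rewrite /E es. apply: le_trans (dual_tri HN _ _) _. by rewrite (dualN HN).
have q : eta * (1 - eta) * E ^+ 2 <= (1 - eta) * a ^+ 2 + eta * b ^+ 2.
  have : E ^+ 2 <= (a + b) ^+ 2 by rewrite ler_sqr ?nnegrE //; lra.
  have : 0 <= eta * (1 - eta) by apply: mulr_ge0; lra.
  have : 0 <= ((1 - eta) * a - eta * b) ^+ 2 by exact: sqr_ge0.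
  nra.
have L2 : 0 < 2 * L by rewrite mulr_gt0.
have q' : eta * (1 - eta) * (E ^+ 2 / (2 * L)) <=
          (1 - eta) * (a ^+ 2 / (2 * L)) + eta * (b ^+ 2 / (2 * L)).
  have k0 : 0 <= (2 * L)^-1 by rewrite invr_ge0 ltW.
  have := ler_wpM2r k0 q. lra.
have c1' := ler_wpM2l (_ : 0 <= 1 - eta) c1.
have c2' := ler_wpM2l e0 c2.
have h1e : 0 <= 1 - eta by lra.
have {}c1' := c1' h1e.
lra.
Qed.

End FPart.

Lemma fin2 (R : realType) (a b : \bar R) (r : R) : (-oo < a)%E -> (-oo < b)%E ->
  (a + b = r%:E)%E -> a = (fine a)%:E /\ b = (fine b)%:E.
Proof. by case: a => [a||] //; case: b => [b||]. Qed.

Section Step.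
Variables (R : realType) (n : nat).
Notation V := 'rV[R]_n.
Variable N : V -> R.
Hypothesis HN : is_norm N.
Variables (f : V -> R) (g : V -> V) (L : R).
Hypothesis Hg : is_gradient f g.
Hypothesis Hc : convex_fun f.
Hypothesis Hs : smooth_wrt N g L.
Hypothesis L0 : 0 < L.
Variables (h w : V -> \bar R) (al M : R).
Hypothesis Hp : eproper h.
Hypothesis Hcv : econvex h.
Hypothesis Hw0 : forall x, (0 <= w x)%E.
Hypothesis Hsc : strongly_convex_on N (edom h) w.
Hypothesis HwM : forall x, edom h x -> (w x <= M%:E)%E.
Hypothesis al0 : 0 < al.

Notation H := (halpha h w al).
Notation hr := (hr h).
Notation wr := (wr w).

Let HE' := @HE R n h w al M Hp Hw0 HwM.
Let econj_ge' := @econj_ge R n h w al M Hp Hw0 HwM.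
Let econj_step' := @econj_step R n N HN h w al M Hp Hcv Hw0 Hsc HwM al0.
Let hconv' := @hconv R n h Hp Hcv.
Let wconv' := @wconv R n N h w M Hp Hcv Hw0 Hsc HwM.
Let dom_conv' := @dom_conv R n h Hp Hcv.
Let rconj_step' := @rconj_step R n N HN f g L Hg Hc Hs L0.
Let descent' := @descent R n N HN f g L Hg Hs.

Lemma gap_split y s : edom h y -> exists A B : R,
  [/\ econj H (- s) = A%:E, rconj f s = B%:E & 
      gap f h w al y s = (f y + (hr y + al * wr y) + (A + B))%:E]
  \/ gap f h w al y s = +oo%E.
Proof.
move=> hy.
have e1 : phialpha f h w al y = (f y + (hr y + al * wr y))%:E.
  by rewrite /phialpha (@HE' y hy) EFinD.
have nA : (-oo < econj H (- s))%E.
  apply: lt_le_trans (@econj_ge' s y hy). exact: ltNyr.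
have nB : (-oo < rconj f s)%E.
  apply: lt_le_trans (rconj_ge f s y). exact: ltNyr.
rewrite /gap e1 /psialpha.
move: nA nB. case: (econj H (- s)) => [A||] //; case: (rconj f s) => [B||] // _ _.
- exists A, B; left. by rewrite -EFinD.
- exists 0, 0; right. by rewrite ?addye ?addey.
- exists 0, 0; right. by rewrite ?addye ?addey.
- exists 0, 0; right. by rewrite ?addye ?addey.
Qed.


Lemma step s x y eta Phi :
  is_argmin_lin h w al s x -> edom h x -> edom h y -> 0 <= eta <= 1 ->
  L * eta = al * (1 - eta) ->
  gap f h w al y s = Phi%:E ->
  (gap f h w al ((1 - eta) *: y + eta *: x) ((1 - eta) *: s + eta *: g y)
     <= ((1 - eta) * Phi)%:E)%E.
Proof.
move=> hm hx hy e01 hL hgap.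
have [e0 e1] : 0 <= eta /\ eta <= 1 by move/andP: e01.
have [A [B [[hA hB hG]|hG]]] := gap_split s hy; last by rewrite hG in hgap.
rewrite hG in hgap. move: hgap => [hPhi].
have t01 : 0 <= 1 - eta <= 1 by apply/andP; split; lra.
have ee : 1 - (1 - eta) = eta by ring.
have ey : (1 - eta) *: y + eta *: x = (1 - eta) *: y + (1 - (1 - eta)) *: x by rewrite ee.
set y' := (1 - eta) *: y + eta *: x.
set s' := (1 - eta) *: s + eta *: g y.
have hy' : edom h y' by rewrite /y' ey; exact: (@dom_conv' y x (1 - eta) t01 hy hx).
have b1 := @descent' y y'.
have eyy : y' - y = eta *: (x - y) by apply/rowP => i; rewrite !mxE; ring.
rewrite eyy dotpZr (NZ HN) ger0_norm // in b1.
have b2 := @hconv' y x (1 - eta) t01 hy hx. rewrite -ey ee in b2.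
have b3 := @wconv' y x (1 - eta) t01 hy hx. rewrite -ey ee in b3.
have b4 := @econj_step' s x (g y) eta hm hx e0.
have hB' : (rconj f s <= B%:E)%E by rewrite hB.
have b5 := @rconj_step' s y B eta e01 hB'.
have hgy : gap f h w al y' s' = ((f y')%:E + (hr y' + al * wr y')%:E) +
    (econj H (- s') + rconj f s') by rewrite /gap /phialpha /psialpha (@HE' y' hy').
have c0 := @econj_ge' s x hx. rewrite hA lee_fin in c0.
rewrite hgy. apply: le_trans.
  apply: leeD; first exact: lexx. apply: leeD; [exact: b4 | exact: b5].
rewrite -!EFinD lee_fin.
rewrite (NB HN y x) in b3.
set D2 := N (x - y) ^+ 2 in b1 b3.
set E2 := dual_norm N (s - g y) ^+ 2 in b4 b5.
have b3' := ler_wpM2l (ltW al0) b3.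
have kD : L / 2 * (eta * N (x - y)) ^+ 2 - al * ((1 - eta) * eta / 2 * D2) = 0.
  have -> : L / 2 * (eta * N (x - y)) ^+ 2 - al * ((1 - eta) * eta / 2 * D2)
    = eta / 2 * D2 * (L * eta - al * (1 - eta)) by rewrite /D2; ring.
  by rewrite hL subrr mulr0.
have kE : eta ^+ 2 * E2 / (2 * al) - eta * (1 - eta) * (E2 / (2 * L)) = 0.
  have -> : eta ^+ 2 * E2 / (2 * al) - eta * (1 - eta) * (E2 / (2 * L))
    = eta * E2 / (2 * al * L) * (L * eta - al * (1 - eta)).
    field. by rewrite !gt_eqF.
  by rewrite hL subrr mulr0.
rewrite -hPhi.
rewrite dotpBr in b1. rewrite dotpBl in b4.
have h1e : 0 <= 1 - eta by lra.
have c0' := ler_wpM2l h1e c0.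
rewrite -/y' in b2 b3'. rewrite dotpBl -/E2. lra.
Qed.

End Step.

Section Main.
Variables (R : realType) (n : nat).
Notation V := 'rV[R]_n.
Variable N : V -> R.
Hypothesis HN : is_norm N.
Variables (f : V -> R) (g : V -> V) (L : R).
Hypothesis Hg : is_gradient f g.
Hypothesis Hc : convex_fun f.
Hypothesis Hs : smooth_wrt N g L.
Hypothesis L0 : 0 < L.
Variables (h w : V -> \bar R) (al M : R).
Hypothesis Hp : eproper h.
Hypothesis Hcv : econvex h.
Hypothesis Hw0 : forall x, (0 <= w x)%E.
Hypothesis Hsc : strongly_convex_on N (edom h) w.
Hypothesis HwM : forall x, edom h x -> (w x <= M%:E)%E.
Hypothesis al0 : 0 < al.
Variable eta : R.
Hypothesis e01 : 0 <= eta <= 1.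
Hypothesis hL : L * eta = al * (1 - eta).
Variables (x y s : nat -> V) (D : R).
Hypothesis hagg : AggGCG g h w al eta x y s.
Hypothesis hy0 : edom h (y 0%N).
Hypothesis hD : (gap f h w al (y 0%N) (s 0%N) <= D%:E)%E.

Notation hr := (hr h).
Notation wr := (wr w).

Let step' := @step R n N HN f g L Hg Hc Hs L0 h w al M Hp Hcv Hw0 Hsc HwM al0.
Let gap_split' := @gap_split R n f h w al M Hp Hw0 HwM.
Let dom_conv' := @dom_conv R n h Hp Hcv.
Let argmin_dom' := @argmin_dom R n h w al M Hp Hw0 HwM al0.
Let econj_ge' := @econj_ge R n h w al M Hp Hw0 HwM.

Lemma finite_gap yy ss r : edom h yy -> (gap f h w al yy ss <= r%:E)%E ->
  exists Phi, gap f h w al yy ss = Phi%:E /\ Phi <= r.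
Proof.
move=> hy hr0.
have [A [B [[hA hB hG]|hG]]] := @gap_split' yy ss hy; last by rewrite hG in hr0.
eexists; split; first exact: hG. by rewrite -lee_fin -hG.
Qed.

Lemma gcg_invariant k : edom h (y k) /\
  exists Phi, gap f h w al (y k) (s k) = Phi%:E /\ Phi <= (1 - eta) ^+ k * D.
Proof.
elim: k => [|k [hyk [Phi [hP hPk]]]].
  split => //. have [Phi [h1 h2]] := finite_gap hy0 hD. exists Phi; split => //.
  by rewrite expr0 mul1r.
have [hm ey es] := hagg k.
have hxk := @argmin_dom' (s k) (x k.+1) (y 0%N) hm hy0.
have t01 : 0 <= 1 - eta <= 1 by case/andP: e01 => ? ?; apply/andP; split; lra.
have ee : 1 - (1 - eta) = eta by ring.
have hyk1 : edom h (y k.+1).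
  rewrite ey. have := @dom_conv' (y k) (x k.+1) (1 - eta) t01 hyk hxk. by rewrite ee.
split => //.
have := @step' (s k) (x k.+1) (y k) eta Phi hm hxk hyk e01 hL hP.
rewrite -ey -es => hle.
have [Phi' [h1 h2]] := finite_gap hyk1 hle.
exists Phi'; split => //. apply: le_trans h2 _.
rewrite exprS -mulrA. apply: ler_wpM2l; first by case/andP: t01.
exact: hPk.
Qed.

Lemma weak_dual yy ss Phi z : edom h yy -> gap f h w al yy ss = Phi%:E -> edom h z ->
  f yy + (hr yy + al * wr yy) - (f z + (hr z + al * wr z)) <= Phi.
Proof.
move=> hy hP hz.
have [A [B [[hA hB hG]|hG]]] := @gap_split' yy ss hy; last by rewrite hG in hP.
rewrite hG in hP. case: hP => <-.
have c1 := @econj_ge' ss z hz. rewrite hA lee_fin in c1.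
have c2 := rconj_ge f ss z. rewrite hB lee_fin in c2.
lra.
Qed.

End Main.

Lemma count_bound (R : realType) (L al eps D : R) (k : nat) :
  0 < L -> 0 < al -> 0 < eps -> 0 <= D ->
  (1 + L / al) * (1 + ln (1 + D / eps)) <= k%:R ->
  (1 - al / (L + al)) ^+ k * D <= eps / 2.
Proof.
move=> L0 al0 e0 D0 hk.
set eta := al / (L + al).
have u0 : 0 < L + al by lra.
have he : eta * (1 + L / al) = 1.
  rewrite /eta; field. by rewrite !gt_eqF.
have De : 0 <= D / eps by rewrite divr_ge0 // ltW.
set lam := ln (1 + D / eps).
have lam0 : 0 <= lam by apply: ln_ge0; lra.
have eta0 : 0 <= eta by rewrite divr_ge0 // ltW.
have eta1 : eta <= 1 by rewrite /eta ler_pdivrMr //; lra.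
have hek : 1 + lam <= eta * k%:R.
  have := ler_wpM2l eta0 hk. by rewrite mulrA he mul1r.
have p1 : (1 - eta) ^+ k <= expR (- eta) ^+ k.
  apply: lerXn2r; rewrite ?nnegrE; [lra | exact: expR_ge0 | ].
  have := expR_ge1Dx (- eta). lra.
have p2 : expR (- eta) ^+ k = expR (- (eta * k%:R)).
  by rewrite -expRM_natl mulrN mulrC.
have p3 : expR (- (eta * k%:R)) <= expR (- (1 + lam)).
  rewrite ler_expR. lra.
have p4 : expR (1 + lam) = expR 1 * (1 + D / eps).
  rewrite expRD /lam lnK //. rewrite posrE. lra.
have e2 : 2 <= expR (1 : R) by have := expR_ge1Dx (1 : R); lra.
have p5 : expR (- (1 + lam)) = (expR 1 * (1 + D / eps))^-1 by rewrite expRN p4.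
have q : (1 - eta) ^+ k <= (expR 1 * (1 + D / eps))^-1.
  rewrite -p5. apply: le_trans p1 _. by rewrite p2.
apply: le_trans (ler_wpM2r D0 q) _.
have pos : 0 < expR 1 * (1 + D / eps) by apply: mulr_gt0; [exact: expR_gt0 | lra].
rewrite mulrC -/(D / _) ler_pdivrMr //.
have : expR 1 * (1 + D / eps) * (eps / 2) = expR 1 / 2 * (eps + D).
  field. by rewrite gt_eqF.
rewrite mulrC. move=> ->.
have : 1 <= expR (1 : R) / 2 by rewrite ler_pdivlMr //; lra.
nra.
Qed.

Lemma fin_ineq (R : realType) (a fy hy wy fz hz wz Phi eps M : R) :
  fy + (hy + a * wy) - (fz + (hz + a * wz)) <= Phi -> Phi <= eps / 2 ->
  0 <= a * wy -> a * wz <= a * M -> a * M = eps / 2 -> fy + hy - eps <= fz + hz.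
Proof. lra. Qed.

Lemma fin_ineq2 (R : realType) (u r eps : R) : u - eps <= r -> u <= r + eps.
Proof. lra. Qed.

Lemma kb1 (R : realType) (u lam t : R) : 0 <= u -> 0 <= lam ->
  t <= (1 + 2 * u) * (1 + lam) -> t + 1 <= 3 * (1 + u) * (1 + lam).
Proof.
move=> u0 l0 ht. have : 0 <= u * lam by apply: mulr_ge0. nra.
Qed.

Theorem theorem4p2 :
  exists C p : nat,
  forall (R : realType) (n : nat) (N : 'rV[R]_n -> R)
    (f : 'rV[R]_n -> R) (gradf : 'rV[R]_n -> 'rV[R]_n) (L : R)
    (h w : 'rV[R]_n -> \bar R) (M eps : R)
    (x y s : nat -> 'rV[R]_n) (D : R),
  is_norm N ->
  convex_fun f -> is_gradient f gradf -> 0 < L -> smooth_wrt N gradf L ->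
  eclosed h -> eproper h -> econvex h -> bounded_dom N h ->
  (forall x0, (0 <= w x0)%E) -> eclosed w -> strongly_convex_on N (edom h) w ->
  (forall x0, edom h x0 -> (w x0 <= M%:E)%E) ->
  (exists2 x0, edom h x0 & w x0 = M%:E) ->
  0 < M ->
  0 < eps ->
  let alpha := eps / (2 * M) in
  let eta := alpha / (L + alpha) in
  edom h (y 0%N) ->
  AggGCG gradf h w alpha eta x y s ->
  (gap f h w alpha (y 0%N) (s 0%N) <= D%:E)%E ->
  exists k : nat,
    [/\ (k%:R <= C%:R * (1 + M * L / eps) * (1 + ln (1 + D / eps)) ^+ p),
        (gap f h w alpha (y k) (s k) <= (eps / 2)%:E)%E
      & (phi f h (y k) <= phi_star f h + eps%:E)%E].
Proof.
exists 3%N, 1%N.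
move=> R n N f gradf L h w M eps x y s D HN Hc Hg L0 Hs _ Hp Hcv _ Hw0 _ Hsc HwM _ M0 e0.
move=> alpha eta hy0 hagg hD.
have al0 : 0 < alpha by rewrite /alpha divr_gt0 // mulr_gt0.
have u0 : 0 < L + alpha by lra.
have eta0 : 0 <= eta by rewrite /eta divr_ge0 // ltW.
have eta1 : eta <= 1 by rewrite /eta ler_pdivrMr //; lra.
have e01 : 0 <= eta <= 1 by rewrite eta0 eta1.
have hL : L * eta = alpha * (1 - eta).
  rewrite /eta. field. by rewrite gt_eqF.
have inv k := @gcg_invariant R n N HN f gradf L Hg Hc Hs L0 h w alpha M Hp Hcv Hw0 Hsc HwM al0
  eta e01 hL x y s D hagg hy0 hD k.
have D0 : 0 <= D.
  have [_ [Phi [hP hPD]]] := inv 0%N.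
  have := @weak_dual R n f h w alpha M Hp Hw0 HwM (y 0%N) (s 0%N) Phi (y 0%N) hy0 hP hy0.
  rewrite expr0 mul1r in hPD. rewrite subrr. lra.
set lam := ln (1 + D / eps).
have De : 0 <= D / eps by rewrite divr_ge0 // ltW.
have lam0 : 0 <= lam by apply: ln_ge0; lra.
set X := (1 + L / alpha) * (1 + lam).
have La : 0 <= L / alpha by rewrite divr_ge0 // ltW.
have X0 : 0 <= X by apply: mulr_ge0; lra.
exists (Num.Def.trunc X).+1.
have eLa : L / alpha = 2 * (M * L / eps).
  rewrite /alpha. field. by apply/andP; split; rewrite gt_eqF.
have MLe : 0 <= M * L / eps by rewrite divr_ge0 // ?mulr_ge0 // ltW.
have [hyk [Phi [hP hPk]]] := inv (Num.Def.trunc X).+1.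
have cb : (1 - eta) ^+ (Num.Def.trunc X).+1 * D <= eps / 2.
  apply: count_bound => //. exact: ltW (truncnS_gt X).
have Phie : Phi <= eps / 2 := le_trans hPk cb.
split.
- rewrite expr1.
  have t1 : (Num.Def.trunc X)%:R <= X by rewrite truncn_le.
  have eX : X = (1 + 2 * (M * L / eps)) * (1 + lam) by rewrite /X eLa.
  move: t1. rewrite {2}eX => t1.
  rewrite -addn1 natrD.
  set u := M * L / eps in MLe t1 *.
  exact: (@kb1 R u lam _ MLe lam0 t1).
- by rewrite hP lee_fin.
- set k := (Num.Def.trunc X).+1 in hyk hP Phie *.
  rewrite /phi (hE Hp hyk) -EFinD.
  have : ((f (y k) + hr h (y k) - eps)%:E <= phi_star f h)%E.
    apply: le_ereal_inf_tmp => _ [z _ <-].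
    have [hz|hz] := pselect (edom h z); last first.
      rewrite /phi. have -> : h z = +oo%E.
        case: Hp => hp _. have := hp z. move: hz. rewrite /edom /=.
        by case: (h z).
      by rewrite addey // leey.
    rewrite /phi (hE Hp hz) -EFinD lee_fin.
    have wk := @weak_dual R n f h w alpha M Hp Hw0 HwM (y k) (s k) Phi z hyk hP hz.
    have wy := wr_ge0 Hw0 HwM hyk.
    have wz : wr w z <= M by have := HwM z hz; rewrite (wE Hw0 HwM hz) lee_fin.
    have aM : alpha * M = eps / 2 by rewrite /alpha; field; rewrite gt_eqF.
    have h1 : alpha * wr w z <= alpha * M by apply: ler_wpM2l => //; exact: ltW.
    have h2 : 0 <= alpha * wr w (y k) by apply: mulr_ge0 => //; exact: ltW.
    exact: (@fin_ineq _ _ _ _ _ _ _ _ _ _ _ wk Phie h2 h1 aM).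
  case: (phi_star f h) => [r| |].
  + rewrite -EFinD !lee_fin. exact: (@fin_ineq2 R).
  + move=> _. by rewrite addye // leey.
  + by rewrite leeNy_eq.
Qed.
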